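(* Let $P$ be a labeled protein tree on a protein set $\mathcal{P}$ (with respect to a gene tree $G$ and map $g:\mathcal{P}\to\mathcal{G}$), let $\mathbb{P}$ be the set of all inclusion-wise maximum creation-free protein subtrees of $P$, and let $\mathbb{P}_{span}$ be the span partition of $\mathcal{P}$ according to $\mathbb{P}$. If $P$ contains at least one node labeled $Creat$, then there exist two distinct sets $S_u,S_v\in\mathbb{P}_{span}$ such that $S_u$, $S_v$ and $S_u\cup S_v$ are each the leaf set of a complete subtree of $P$, and moreover: (1) $l_P(lca_P(S_u\cup S_v))=Creat$; (2) for every $t\in\{u,v\}$ and every $P_i\in span(S_t)$, $P|_{S_t}=P_i|_{S_t}$; (3) $span(S_u)\cap span(S_v)=\emptyset$; (4) $\{P_i|_{\mathcal{L}(P_i)-S_u} : P_i\in span(S_u)\} = \{P_i|_{\mathcal{L}(P_i)-S_v} : P_i\in span(S_v)\}$.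
   Context: Trees are rooted binary with leaves labeled bijectively by a finite set. $T[x]$ is the complete subtree of $T$ rooted at node $x$; a complete subtree is one of this form. $\mathcal{L}(T)$ is the leaf set, $x_l,x_r$ the children of an internal node $x$, $lca_T(L')$ the lowest common ancestor of $L'$. For $L'\subseteq\mathcal{L}(T)$, $T|_{L'}$ is the tree on $L'$ obtained from the subtree of $T$ spanned by $L'$, rooted at $lca_T(L')$, by suppressing all non-root nodes of degree 2. Setting: $\mathcal{P}$ (proteins), $\mathcal{G}$ (genes), surjective $g:\mathcal{P}\to\mathcal{G}$; $G$ a gene tree on $\mathcal{G}$ whose internal nodes are labeled $Spec$ or $Dup$ (via LCA-reconciliation with a species tree); $P$ a protein tree on $\mathcal{P}$. Extend $g$ to internal nodes of $P$ by $g(x)=lca_G(\{g(x'):x'\in\mathcal{L}(P[x])\})$. The labeling $l_P$ of internal nodes of $P$: $l_P(x)=Creat$ if $g(x)=g(x_l)$ or $g(x)=g(x_r)$; otherwise $l_P(x)$ equals the label ($Spec$ or $Dup$) of $g(x)$ in $G$. A labeled protein tree is $P$ together with $l_P$. Two proteins $x,y$ are orthologs if $l_P(lca_P(\{x,y\}))\neq Creat$. A creation-free protein subtree of $P$ is $P|_{L'}$ for $L'\subseteq\mathcal{P}$ in which every pair of proteins are orthologs; it is inclusion-wise maximum if $L'$ is maximal under inclusion among such sets. Write $\mathbb{P}=\{P_1,\dots,P_k\}$ for the set of all such maximum subtrees. For $x\in\mathcal{P}$, $span(x)=\{P_i\in\mathbb{P}: x\in\mathcal{L}(P_i)\}$.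 The span partition $\mathbb{P}_{span}$ is the partition of $\mathcal{P}$ into classes of proteins having equal $span$; for a class $S_t$, $span(S_t)$ is the common value $span(x)$, $x\in S_t$. *)

(* Defs.v *)
From HB Require Import structures.
From mathcomp Require Import all_boot.
Set Implicit Arguments. Unset Strict Implicit. Unset Printing Implicit Defensive.

(* Children order is irrelevant
   for tree identity: trees are compared via [same_tree] (equal cluster sets). *)
Inductive tree (A T : Type) := Leaf of T | Node of A & tree A T & tree A T.
Arguments Leaf {A T}. Arguments Node {A T}.

Section TreeEq.
Variables (A T : eqType).
Fixpoint tree_eqb (t1 t2 : tree A T) : bool :=
  match t1, t2 with
  | Leaf x, Leaf y => x == y
  | Node a l r, Node b l' r' => [&& a == b, tree_eqb l l' & tree_eqb r r']
  | _, _ => false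
  end.
Lemma tree_eqP : Equality.axiom tree_eqb.
Proof.
elim=> [x|a l IHl r IHr] [y|b l' r'] /=; try by constructor.
- by apply: (iffP eqP) => [->|[]].
- case: eqP => [->|ne]; last by constructor; case.
  case: IHl => [->|ne]; last by constructor; case.
  by case: IHr => [->|ne]; constructor => //; case.
Qed.
HB.instance Definition _ := hasDecEq.Build (tree A T) tree_eqP.
End TreeEq.

Inductive event := Spec | Dup | Creat.
Definition event_eqb (a b : event) := match a, b with
  | Spec, Spec | Dup, Dup | Creat, Creat => true | _, _ => false end.
Lemma event_eqP : Equality.axiom event_eqb.
Proof. by case; case; constructor. Qed.
HB.instance Definition _ := hasDecEq.Build event event_eqP.

Section Trees.
Variables (A : eqType) (T : finType).
Implicit Types (t s : tree A T) (L : {set T}).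

Fixpoint leaves t : seq T :=
  match t with Leaf x => [:: x] | Node _ l r => leaves l ++ leaves r end.
Definition leafset t : {set T} := [set x | x \in leaves t].

Fixpoint subtrees t : seq (tree A T) :=
  match t with Leaf x => [:: t] | Node _ l r => t :: subtrees l ++ subtrees r end.

Definition bij_labeled t := uniq (leaves t) /\ forall x : T, x \in leaves t.

Definition is_cluster t L := exists2 s, s \in subtrees t & leafset s = L.

Fixpoint lca t L : option (tree A T) :=
  match t with
  | Leaf x => if L \subset [set x] then Some t else None
  | Node _ l r =>
      if L \subset leafset l then lca l L
      else if L \subset leafset r then lca r L
      else if L \subset leafset t then Some t else None
  end.

(* t|_L : spanned subtree rooted at lca, degree-2 non-root nodes suppressed *)
Fixpoint restrict t L : option (tree A T) :=
  match t with
  | Leaf x => if x \in L then Some t else None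
  | Node a l r =>
      match restrict l L, restrict r L with
      | Some l', Some r' => Some (Node a l' r')
      | Some l', None => Some l'
      | None, Some r' => Some r'
      | None, None => None
      end
  end.
Definition orestrict (ot : option (tree A T)) L := obind (restrict ^~ L) ot.

(* equality of leaf-labeled rooted trees (up to isomorphism):
   same set of clusters; the empty tree is [None] *)
Definition clusters (ot : option (tree A T)) : seq {set T} :=
  if ot is Some t then map leafset (subtrees t) else [::].
Definition same_tree (o1 o2 : option (tree A T)) := clusters o1 =i clusters o2.
End Trees.

Section Protein.
Variables (Prot Gene : finType) (g : Prot -> Gene)
          (G : tree event Gene) (P : tree unit Prot).

Definition gene_labels_ok :=
  forall s, s \in subtrees G -> if s is Node e _ _ then e != Creat else true.

Definition gnode (x : tree unit Prot) := lca G (g @: leafset x).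

Definition lP (x : tree unit Prot) : option event :=
  match x with
  | Leaf _ => None
  | Node _ l r =>
      if (gnode x == gnode l) || (gnode x == gnode r) then Some Creat
      else if gnode x is Some (Node e _ _) then Some e else None
  end.

Definition orthologs (x y : Prot) : bool :=
  obind lP (lca P [set x; y]) != Some Creat.

(* L' is the leaf set of a creation-free protein subtree *)
Definition creation_free (L : {set Prot}) : bool :=
  [forall x in L, forall y in L, (x != y) ==> orthologs x y].

(* leaf sets of the inclusion-wise maximum creation-free subtrees P_i = P|_{L_i} *)
Definition maxCF : {set {set Prot}} := [set L | maxset creation_free L].

Definition span (x : Prot) : {set {set Prot}} := [set L in maxCF | x \in L].

Definition span_class (x : Prot) : {set Prot} := [set y | span y == span x].
Definition span_partition : {set {set Prot}} := [set span_class x | x : Prot].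
End Protein.

(* Main.v *)
Require Import Defs.
From HB Require Import structures.
From mathcomp Require Import all_boot.
Set Implicit Arguments. Unset Strict Implicit. Unset Printing Implicit Defensive.

Section Comb.
Variables (T : finType) (O : T -> T -> bool).
Definition CF (L : {set T}) : bool :=
  [forall x in L, forall y in L, (x != y) ==> O x y].
Definition maxCFA : {set {set T}} := [set L | maxset CF L].
Definition spanA (x : T) : {set {set T}} := [set L in maxCFA | x \in L].
Definition classA (x : T) : {set T} := [set y | spanA y == spanA x].

Lemma CFP (L : {set T}) : reflect (forall a b, a \in L -> b \in L -> a != b -> O a b) (CF L).
Proof.
apply: (iffP forall_inP) => [H a b aL bL ab|H a aL].
  by have /forall_inP/(_ b bL)/implyP := H a aL; apply.
by apply/forall_inP => b bL; apply/implyP; apply: H.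
Qed.

Lemma CFE (L : {set T}) : CF L -> forall a b, a \in L -> b \in L -> a != b -> O a b.
Proof. by move/CFP. Qed.

Hypothesis Osym : forall a b, O a b = O b a.
Variables (Ll Lr : {set T}).
Hypothesis disj : forall y, y \in Ll -> y \notin Lr.
Hypothesis neL : exists y, y \in Ll.
Hypothesis neR : exists y, y \in Lr.
Hypothesis Oinl : forall a b, a \in Ll -> b \in Ll -> O a b.
Hypothesis Oinr : forall a b, a \in Lr -> b \in Lr -> O a b.
Hypothesis Oacr : forall a b, a \in Ll -> b \in Lr -> ~~ O a b.
Hypothesis Oout : forall a a' w, a \in Ll :|: Lr -> a' \in Ll :|: Lr ->
   w \notin Ll :|: Lr -> O a w = O a' w.

Lemma max_contains M y : maxset CF M -> y \in M -> y \in Ll -> Ll \subset M.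
Proof.
move=> mM yM yL.
have CFM := maxsetp mM.
have CFU : CF (M :|: Ll).
  apply/CFP => a b; rewrite !inE.
  have key : forall m y', m \in M -> y' \in Ll -> m != y' -> O m y'.
    move=> m y' mM' y'L ne.
    case: (boolP (m \in Ll)) => mL; first exact: Oinl.
    case: (boolP (m \in Lr)) => mR.
      have := CFE CFM yM mM'.
      have := Oacr yL mR => /negbTE -> H.
      have: y != m by apply/eqP => e; move: mL; rewrite -e yL.
      by move/H.
    have mX : m \notin Ll :|: Lr by rewrite inE negb_or mL mR.
    rewrite Osym (Oout (a':=y) _ _ mX) ?inE ?yL ?y'L //.
    rewrite Osym; apply: (CFE CFM) => //.
    by apply/eqP => e; move: mL; rewrite e yL.
  case/orP=> aI; case/orP=> bI ab.
  - exact: (CFE CFM).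
  - exact: key.
  - by rewrite Osym; apply: key => //; rewrite eq_sym.
  - exact: Oinl.
have := maxsetsup mM CFU (subsetUl _ _) => <-.
exact: subsetUr.
Qed.

Lemma max_excl M y z : maxset CF M -> y \in M -> y \in Ll -> z \in Lr -> z \notin M.
Proof.
move=> mM yM yL zR; apply/negP => zM.
have := CFE (maxsetp mM) yM zM.
have -> : y != z by apply/eqP => e; move: (disj yL); rewrite e zR.
by move/(_ isT); apply/negP; apply: Oacr.
Qed.

Lemma spanA_l y M : y \in Ll -> (M \in spanA y) = (M \in maxCFA) && (Ll \subset M).
Proof.
move=> yL; rewrite !inE; case: (boolP (maxset CF M)) => //= mM.
apply/idP/idP => [yM|/subsetP]; [exact: max_contains yM yL | by apply].
Qed.
End Comb.

Section Comb2.
Variables (T : finType) (O : T -> T -> bool).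
Hypothesis Osym : forall a b, O a b = O b a.
Variables (Ll Lr : {set T}).
Hypothesis disj : forall y, y \in Ll -> y \notin Lr.
Hypothesis neL : exists y, y \in Ll.
Hypothesis neR : exists y, y \in Lr.
Hypothesis Oinl : forall a b, a \in Ll -> b \in Ll -> O a b.
Hypothesis Oinr : forall a b, a \in Lr -> b \in Lr -> O a b.
Hypothesis Oacr : forall a b, a \in Ll -> b \in Lr -> ~~ O a b.
Hypothesis Oout : forall a a' w, a \in Ll :|: Lr -> a' \in Ll :|: Lr ->
   w \notin Ll :|: Lr -> O a w = O a' w.

Lemma disj' y : y \in Lr -> y \notin Ll.
Proof. by move=> yR; apply/negP => /disj; rewrite yR. Qed.
Lemma Oacr' a b : a \in Lr -> b \in Ll -> ~~ O a b.
Proof. by move=> aR bL; rewrite Osym; apply: Oacr. Qed.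
Lemma Oout' a a' w : a \in Lr :|: Ll -> a' \in Lr :|: Ll ->
   w \notin Lr :|: Ll -> O a w = O a' w.
Proof. rewrite !(setUC Lr); exact: Oout. Qed.

Lemma ex_max (C : {set T}) : CF O C -> exists2 M, maxset (CF O) M & C \subset M.
Proof. by move=> H; case: (maxset_exists H) => M ? ?; exists M. Qed.

Lemma classA_l y : y \in Ll -> classA O y = Ll.
Proof.
move=> yL; apply/setP => w; rewrite inE.
case: (boolP (w \in Ll)) => wL.
  apply/eqP/setP => M; by rewrite (spanA_l Osym Oinl Oacr Oout M wL)
      (spanA_l Osym Oinl Oacr Oout M yL).
apply/negP => /eqP E.
have CF1 : CF O [set y].
  by apply/CFP => a b; rewrite !inE => /eqP -> /eqP ->; rewrite eqxx.
have [M0 mM0 sM0] := ex_max CF1.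
have M0y : M0 \in spanA O y by rewrite !inE mM0 -sub1set.
have : M0 \in spanA O w by rewrite E.
rewrite inE => /andP [_ wM0].
have yM0 : y \in M0 by rewrite -sub1set.
have wy : w != y by apply/eqP => e; move: wL; rewrite e yL.
have Owy : O w y by apply: (CFE (maxsetp mM0)).
case: (boolP (w \in Lr)) => wR.
  by move: (max_excl disj Oacr mM0 yM0 yL wR); rewrite wM0.
have wX : w \notin Ll :|: Lr by rewrite inE negb_or wL wR.
have [z zR] := neR.
have CFwR : CF O (w |: Lr).
  apply/CFP => a b; rewrite !inE => /orP [/eqP->|aR] /orP [/eqP->|bR]; rewrite ?eqxx //.
  - by move=> _; rewrite Osym (Oout (a' := y) _ _ wX) ?inE ?bR ?yL ?orbT // Osym.
  - by move=> _; rewrite (Oout (a' := y) _ _ wX) ?inE ?aR ?yL ?orbT // Osym.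
  - by move=> _; apply: Oinr.
have [M mM sM] := ex_max CFwR.
have : M \in spanA O w by rewrite !inE mM (subsetP sM) // !inE eqxx.
rewrite E inE => /andP [_ yM].
have zM : z \in M by rewrite (subsetP sM) // inE zR orbT.
by move: (max_excl disj Oacr mM yM yL zR); rewrite zM.
Qed.

Lemma CF_U (A C : {set T}) : CF O A -> CF O C ->
  (forall a c, a \in A -> c \in C -> a != c -> O a c) -> CF O (A :|: C).
Proof.
move=> /CFE hA /CFE hC H; apply/CFP => a b; rewrite !inE.
case/orP => aI; case/orP => bI ab; first exact: hA.
- exact: H.
- by rewrite Osym; apply: H => //; rewrite eq_sym.
- exact: hC.
Qed.

Lemma CF_sub (A C : {set T}) : CF O A -> C \subset A -> CF O C.
Proof. by move=> /CFE hA /subsetP sCA; apply/CFP => a b /sCA aA /sCA bA; apply: hA. Qed.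

Lemma CF_set (A : {set T}) : (forall a b, a \in A -> b \in A -> O a b) -> CF O A.
Proof. by move=> H; apply/CFP => a b aA bA _; apply: H. Qed.

Lemma swap_max u v Li : u \in Ll -> v \in Lr -> Li \in spanA O u ->
  (Li :\: Ll) :|: Lr \in spanA O v /\ ((Li :\: Ll) :|: Lr) :\: Lr = Li :\: Ll.
Proof.
move=> uL vR; rewrite (spanA_l Osym Oinl Oacr Oout _ uL) inE => /andP [mLi sLi].
have uLi : u \in Li by apply: (subsetP sLi).
have nR : forall z, z \in Lr -> z \notin Li.
  by move=> z zR; apply: (max_excl disj Oacr mLi uLi uL zR).
have CFLi := maxsetp mLi.
have [z zR] := neR.
have outX : forall a, a \notin Ll -> a \notin Lr -> a \notin Ll :|: Lr.
  by move=> a h1 h2; rewrite inE negb_or h1 h2.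
have CFj : CF O ((Li :\: Ll) :|: Lr).
  apply: CF_U; [exact: CF_sub CFLi (subsetDl _ _) | exact: CF_set Oinr |].
  move=> a b; rewrite inE => /andP [aL aLi] bR _.
  have aR : a \notin Lr by apply/negP => /nR; rewrite aLi.
  rewrite Osym (Oout (a' := u) _ _ (outX _ aL aR)) ?inE ?bR ?uL ?orbT // Osym.
  apply: (CFE CFLi) => //; apply/eqP => e; move: aL; by rewrite e uL.
split; last first.
  apply/setP => w; rewrite !inE; case: (boolP (w \in Lr)) => //= wR.
  by rewrite (negbTE (nR _ wR)) andbF.
by rewrite orbF.
rewrite (spanA_l Osym Oinr Oacr' Oout' _ vR) !inE subsetUr andbT.
apply/maxsetP; split => // B CFB sB.
have zB : z \in B by apply: (subsetP sB); rewrite inE zR orbT.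
apply/eqP; rewrite eqEsubset sB andbT; apply/subsetP => w wB.
rewrite !inE; case: (boolP (w \in Lr)) => wR; rewrite ?orbT //= orbF.
case: (boolP (w \in Ll)) => wL /=.
  have := CFE CFB wB zB; rewrite (negbTE (Oacr wL zR)).
  have -> : w != z by apply/eqP => e; move: wR; rewrite e zR.
  by move/(_ isT).
have CFB' : CF O ((B :\: Lr) :|: Ll).
  apply: CF_U; [exact: CF_sub CFB (subsetDl _ _) | exact: CF_set Oinl |].
  move=> a b; rewrite inE => /andP [aR aB] bL _.
  case: (boolP (a \in Ll)) => aL; first exact: Oinl.
  rewrite Osym (Oout (a' := z) _ _ (outX _ aL aR)) ?inE ?bL ?zR ?orbT // Osym.
  apply: (CFE CFB) => //; apply/eqP => e; move: aR; by rewrite e zR.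
have sLi' : Li \subset (B :\: Lr) :|: Ll.
  apply/subsetP => x xLi; rewrite !inE; case: (boolP (x \in Ll)) => xL; rewrite ?orbT //.
  have xR : x \notin Lr by apply/negP => /nR; rewrite xLi.
  rewrite orbF xR /=.
  apply: (subsetP sB); by rewrite !inE xL xLi.
have := maxsetsup mLi CFB' sLi' => E.
have : w \in (B :\: Lr) :|: Ll by rewrite !inE wR wB.
by rewrite E.
Qed.
End Comb2.


Section TreeLemmas.
Variables (A : eqType) (T : finType).
Implicit Types (t s u l r : tree A T) (L : {set T}) (a : A).

Lemma subtrees_self t : t \in subtrees t.
Proof. by case: t => [x|a l r] /=; rewrite inE eqxx. Qed.

Lemma subtrees_trans t s u : s \in subtrees t -> u \in subtrees s -> u \in subtrees t.
Proof.
elim: t => [x|a l IHl r IHr] /=; first by rewrite inE => /eqP ->.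
rewrite inE mem_cat => /orP [/eqP ->|/orP [sl|sr]] //= us.
- by rewrite inE mem_cat (IHl sl us) orbT.
- by rewrite inE mem_cat (IHr sr us) !orbT.
Qed.

Lemma leafset_Node a l r : leafset (Node a l r) = leafset l :|: leafset r.
Proof. by apply/setP => x; rewrite !inE mem_cat. Qed.

Lemma leafset_Leaf x : leafset (Leaf x : tree A T) = [set x].
Proof. by apply/setP => y; rewrite !inE. Qed.

Lemma leafset_sub t s : s \in subtrees t -> leafset s \subset leafset t.
Proof.
elim: t => [x|a l IHl r IHr] /=; first by rewrite inE => /eqP ->.
rewrite inE mem_cat leafset_Node => /orP [/eqP ->|/orP [sl|sr]].
- by rewrite leafset_Node.
- exact: subset_trans (IHl sl) (subsetUl _ _).
- exact: subset_trans (IHr sr) (subsetUr _ _).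
Qed.

Lemma uniq_sub t s : uniq (leaves t) -> s \in subtrees t -> uniq (leaves s).
Proof.
elim: t => [x|a l IHl r IHr] /=; first by move=> _; rewrite inE => /eqP ->.
move=> U; have := U; rewrite cat_uniq => /and3P [Ul _ Ur].
rewrite inE mem_cat => /orP [/eqP ->|/orP [sl|sr]] //; [exact: IHl | exact: IHr].
Qed.

Lemma disj_lr a l r y : uniq (leaves (Node a l r)) -> y \in leafset l -> y \notin leafset r.
Proof.
rewrite /= cat_uniq => /and3P [_ H _]; rewrite !inE => yl; apply/negP => yr.
by move/hasP: H; apply; exists y.
Qed.

Lemma leaves_ne t : exists y, y \in leafset t.
Proof.
elim: t => [x|a l [y Hy] r _]; first by exists x; rewrite inE mem_head.
by exists y; rewrite leafset_Node inE Hy.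
Qed.

Lemma uniq_lr a l r : uniq (leaves (Node a l r)) -> uniq (leaves l) /\ uniq (leaves r).
Proof. by rewrite /= cat_uniq => /and3P [-> _ ->]. Qed.

Lemma lca_sub t s L : uniq (leaves t) -> s \in subtrees t -> L != set0 ->
  L \subset leafset s -> lca t L = lca s L.
Proof.
elim: t => [x|a l IHl r IHr] U; first by rewrite inE => /eqP ->.
have [Ul Ur] := uniq_lr U.
rewrite inE mem_cat => /orP [/eqP ->|/orP [sl|sr]] // L0 Ls /=.
  have Lsub := subset_trans Ls (leafset_sub sl).
  by rewrite Lsub; apply: IHl.
have Lsub := subset_trans Ls (leafset_sub sr).
case: (set_0Vmem L) L0 => [->|[y yL]]; first by rewrite eqxx.
have : L \subset leafset l = false.
  apply/negP => /subsetP /(_ y yL) yl.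
  by move: (disj_lr U yl); rewrite (subsetP Lsub y yL).
by move=> -> L0; rewrite Lsub; apply: IHr.
Qed.

Lemma lca_in s L : L \subset leafset s -> exists2 s', s' \in subtrees s & lca s L = Some s'.
Proof.
elim: s => [x|a l IHl r IHr] /= Ls.
  by rewrite -leafset_Leaf Ls; exists (Leaf x); rewrite // inE.
case: ifP => [/IHl [s' H1 H2]|_]; first by exists s' => //; rewrite inE mem_cat H1 orbT.
case: ifP => [/IHr [s' H1 H2]|_]; first by exists s' => //; rewrite inE mem_cat H1 !orbT.
by rewrite Ls; exists (Node a l r); rewrite // inE eqxx.
Qed.

Lemma lca_out t y y' w s : uniq (leaves t) -> s \in subtrees t ->
  y \in leafset s -> y' \in leafset s -> w \notin leafset s ->
  lca t [set y; w] = lca t [set y'; w].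
Proof.
elim: t => [x|a l IHl r IHr] U.
  by rewrite inE => /eqP -> ; rewrite leafset_Leaf !inE => /eqP -> /eqP ->.
have [Ul Ur] := uniq_lr U.
rewrite inE mem_cat /= !subUset !sub1set => /orP [/eqP ->|/orP [sl|sr]] ys y's ws.
- have wl : w \notin leafset l by apply: contra ws; rewrite leafset_Node in_setU => ->.
  have wr : w \notin leafset r by apply: contra ws; rewrite leafset_Node in_setU => ->; rewrite orbT.
  by rewrite (negbTE ws) (negbTE wl) (negbTE wr) !andbF.
- have yl := subsetP (leafset_sub sl) y ys.
  have y'l := subsetP (leafset_sub sl) y' y's.
  rewrite yl y'l (negbTE (disj_lr U yl)) (negbTE (disj_lr U y'l)) /=.
  have yN : y \in leafset (Node a l r) by rewrite leafset_Node in_setU yl.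
  have y'N : y' \in leafset (Node a l r) by rewrite leafset_Node in_setU y'l.
  case: ifP => wl; first exact: IHl Ul sl ys y's ws.
  by rewrite yN y'N.
- have yr := subsetP (leafset_sub sr) y ys.
  have y'r := subsetP (leafset_sub sr) y' y's.
  have nl : forall z, z \in leafset r -> z \notin leafset l.
    move=> z zr; apply/negP => zl; by move: (disj_lr U zl); rewrite zr.
  rewrite yr y'r (negbTE (nl _ yr)) (negbTE (nl _ y'r)) /=.
  have yN : y \in leafset (Node a l r) by rewrite leafset_Node in_setU yr orbT.
  have y'N : y' \in leafset (Node a l r) by rewrite leafset_Node in_setU y'r orbT.
  case: ifP => wr; first exact: IHr Ur sr ys y's ws.
  by rewrite yN y'N.
Qed.

Lemma restrict_restrict t L L' : L \subset L' ->
  orestrict (restrict t L') L = restrict t L.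
Proof.
move=> /subsetP sLL'; rewrite /orestrict.
elim: t => [x|a l IHl r IHr] /=.
  case: ifP => xL' /=; first by [].
  by case: ifP => // /sLL'; rewrite xL'.
move: IHl IHr.
case: (restrict l L') => [l'|]; case: (restrict r L') => [r'|] /= <- <- //. all: by case: restrict.
Qed.

Lemma min_node (p : pred (tree A T)) t : (exists2 x, x \in subtrees t & p x) ->
  exists2 x, x \in subtrees t & p x /\
    (if x is Node _ l r then forall s, s \in subtrees l ++ subtrees r -> ~~ p s else True).
Proof.
elim: t => [y|a l IHl r IHr] /=.
  by case=> x; rewrite inE => /eqP -> px; exists (Leaf y); rewrite ?inE.
case=> x0 x0in px0.
case: (boolP (has p (subtrees l))) => [/hasP [z zin pz]|nl].
  have [x xin H] := IHl (ex_intro2 _ _ z zin pz).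
  by exists x => //; rewrite inE mem_cat xin orbT.
case: (boolP (has p (subtrees r))) => [/hasP [z zin pz]|nr].
  have [x xin H] := IHr (ex_intro2 _ _ z zin pz).
  by exists x => //; rewrite inE mem_cat xin !orbT.
exists (Node a l r); first by rewrite inE eqxx.
split.
  move: x0in; rewrite inE mem_cat => /orP [/eqP <- //|/orP [xl|xr]].
  - by move/hasP: nl; case; exists x0.
  - by move/hasP: nr; case; exists x0.
move=> s; rewrite mem_cat => /orP [sl|sr]; apply/negP => ps.
- by move/hasP: nl; apply; exists s.
- by move/hasP: nr; apply; exists s.
Qed.
End TreeLemmas.

Theorem lemma1 (Prot Gene : finType) (g : Prot -> Gene)
    (G : tree event Gene) (P : tree unit Prot) :
  bij_labeled G -> gene_labels_ok G -> (forall y : Gene, exists x, g x = y) ->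
  bij_labeled P ->
  (exists2 x, x \in subtrees P & lP g G x = Some Creat) ->
  exists u v : Prot,
    let Su := span_class g G P u in
    let Sv := span_class g G P v in
      Su \in span_partition g G P /\ Sv \in span_partition g G P /\ Su != Sv /\
        is_cluster P Su /\ is_cluster P Sv /\ is_cluster P (Su :|: Sv) /\
        (* (1) *) obind (lP g G) (lca P (Su :|: Sv)) = Some Creat /\
        (* (2) *) (forall Li, Li \in span g G P u ->
                    same_tree (restrict P Su) (orestrict (restrict P Li) Su)) /\
                  (forall Li, Li \in span g G P v ->
                    same_tree (restrict P Sv) (orestrict (restrict P Li) Sv)) /\
        (* (3) *) span g G P u :&: span g G P v = set0 /\
        (* (4) *) (forall Li, Li \in span g G P u -> exists2 Lj, Lj \in span g G P v &
                    same_tree (orestrict (restrict P Li) (Li :\: Su))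
                              (orestrict (restrict P Lj) (Lj :\: Sv))) /\
                  (forall Lj, Lj \in span g G P v -> exists2 Li, Li \in span g G P u &
                    same_tree (orestrict (restrict P Li) (Li :\: Su))
                              (orestrict (restrict P Lj) (Lj :\: Sv))).
Proof.
move=> _ _ _ [UP _] [x0 x0in cx0].
have [x xin [/eqP cx hmin]] :=
  min_node (p := fun s => lP g G s == Some Creat) (ex_intro2 _ _ x0 x0in (introT eqP cx0)).
case: x xin cx hmin => [y|a l r] xin cx hmin; first by [].
set O := orthologs g G P.
set Ll := leafset l. set Lr := leafset r.
have UX := uniq_sub UP xin.
have lsub : l \in subtrees P.
  by apply: subtrees_trans xin _; rewrite inE mem_cat subtrees_self orbT.
have rsub : r \in subtrees P.
  by apply: subtrees_trans xin _; rewrite inE mem_cat subtrees_self !orbT.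
have Osym : forall a b, O a b = O b a by move=> a0 b0; rewrite /O /orthologs setUC.
have disj : forall y, y \in Ll -> y \notin Lr by move=> y; apply: disj_lr UX.
have neL : exists y, y \in Ll by apply: leaves_ne.
have neR : exists y, y \in Lr by apply: leaves_ne.
have ne2 : forall a0 b0 : Prot, [set a0; b0] != set0.
  by move=> a0 b0; apply/set0Pn; exists a0; rewrite !inE eqxx.
have Oin : forall s, s \in subtrees l ++ subtrees r -> s \in subtrees P ->
    forall a0 b0, a0 \in leafset s -> b0 \in leafset s -> O a0 b0.
  move=> s sin sP a0 b0 a0s b0s.
  have sub : [set a0; b0] \subset leafset s by rewrite subUset !sub1set a0s b0s.
  rewrite /O /orthologs (lca_sub UP sP (ne2 _ _) sub).
  have [s' s'in ->] := lca_in sub; rewrite /=.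
  apply: hmin; move: sin; rewrite !mem_cat => /orP [sl|sr].
  - by rewrite (subtrees_trans sl s'in).
  - by rewrite (subtrees_trans sr s'in) orbT.
have Oinl : forall a b, a \in Ll -> b \in Ll -> O a b.
  by apply: Oin lsub; rewrite mem_cat subtrees_self.
have Oinr : forall a b, a \in Lr -> b \in Lr -> O a b.
  by apply: Oin rsub; rewrite mem_cat subtrees_self orbT.
have lroot : forall (L : {set Prot}) a0 b0, L \subset leafset (Node a l r) -> a0 \in L -> a0 \in Ll ->
    b0 \in L -> b0 \in Lr -> lca P L = Some (Node a l r).
  move=> L a0 b0 sL a0L a0l b0L b0r.
  have L0 : L != set0 by apply/set0Pn; exists a0.
  rewrite (lca_sub UP xin L0 sL) /= sL.
  have -> : L \subset leafset l = false.
    by apply/negP => /subsetP /(_ b0 b0L) bl; move: (disj _ bl); rewrite b0r.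
  have -> // : L \subset leafset r = false.
  by apply/negP => /subsetP /(_ a0 a0L) ar; move: (disj _ a0l); rewrite ar.
have Oacr : forall a b, a \in Ll -> b \in Lr -> ~~ O a b.
  move=> a0 b0 a0l b0r; rewrite /O /orthologs.
  have sub : [set a0; b0] \subset leafset (Node a l r).
    by rewrite leafset_Node subUset !sub1set !in_setU a0l b0r orbT.
  have a0in : a0 \in [set a0; b0] by rewrite !inE eqxx.
  have b0in : b0 \in [set a0; b0] by rewrite !inE eqxx orbT.
  have cx' : obind (lP g G) (Some (Node a l r)) = Some Creat := cx.
  by rewrite (lroot _ a0 b0 sub a0in a0l b0in b0r) cx'.
have Oout : forall a a' w, a \in Ll :|: Lr -> a' \in Ll :|: Lr ->
   w \notin Ll :|: Lr -> O a w = O a' w.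
  move=> a0 a' w; rewrite /Ll /Lr -(leafset_Node a) => h1 h2 h3.
  by rewrite /O /orthologs (lca_out UP xin h1 h2 h3).
have [u uL] := neL.
have [v vR] := neR.
have spanE : forall w, span g G P w = spanA O w by [].
have Su : span_class g G P u = Ll := classA_l Osym disj neR Oinl Oinr Oacr Oout uL.
have disj2 : forall y, y \in Lr -> y \notin Ll by move=> y yR; apply/negP => yL; move: (disj _ yL); rewrite yR.
have Oacr2 : forall a b, a \in Lr -> b \in Ll -> ~~ O a b by move=> a0 b0 h1 h2; rewrite Osym; apply: Oacr.
have Oout2 : forall a a' w, a \in Lr :|: Ll -> a' \in Lr :|: Ll ->
   w \notin Lr :|: Ll -> O a w = O a' w by move=> a0 a1 w; rewrite !(setUC Lr); apply: Oout.
have Sv : span_class g G P v = Lr := classA_l Osym disj2 neL Oinr Oinl Oacr2 Oout2 vR.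
have inPart : forall w, span_class g G P w \in span_partition g G P.
  by move=> w; apply/imsetP; exists w.
exists u, v; cbv zeta.
split; first exact: inPart.
split; first exact: inPart.
rewrite Su Sv !spanE.
split.
  by apply/eqP => e; move: (disj _ uL); rewrite -e uL.
split; first by exists l.
split; first by exists r.
split; first by exists (Node a l r) => //; rewrite leafset_Node.
split.
  have sub : Ll :|: Lr \subset leafset (Node a l r) by rewrite leafset_Node.
  have uin : u \in Ll :|: Lr by rewrite in_setU uL.
  have vin : v \in Ll :|: Lr by rewrite in_setU vR orbT.
  by rewrite (lroot _ u v sub uin uL vin vR).
split.
  move=> Li; rewrite (spanA_l Osym Oinl Oacr Oout Li uL) => /andP [_ s].
  by rewrite restrict_restrict.
split.
  move=> Li; rewrite (spanA_l Osym Oinr Oacr2 Oout2 Li vR) => /andP [_ s].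
  by rewrite restrict_restrict.
split.
  apply/setP => M; rewrite !inE; apply/negP => /andP [/andP [mM uM] /andP [_ vM]].
  by move: (max_excl disj Oacr mM uM uL vR); rewrite vM.
split.
  move=> Li Lin.
  have [H1 H2] := swap_max Osym disj neR Oinl Oinr Oacr Oout uL vR Lin.
  exists ((Li :\: Ll) :|: Lr); first exact: H1.
  rewrite H2 (restrict_restrict _ (subsetDl Li Ll)).
  by rewrite (restrict_restrict _ (subsetUl (Li :\: Ll) Lr)).
move=> Lj Ljn.
have [H1 H2] := swap_max Osym disj2 neL Oinr Oinl Oacr2 Oout2 vR uL Ljn.
exists ((Lj :\: Lr) :|: Ll); first exact: H1.
rewrite H2 (restrict_restrict _ (subsetDl Lj Lr)).
by rewrite (restrict_restrict _ (subsetUl (Lj :\: Lr) Ll)).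
Qed.
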